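(* Let $H$ be a real Hilbert space with inner product $\langle\cdot,\cdot\rangle$ and norm $|\cdot|$, and let $A_1:D(A_1)\subset H\to H$, $A_2:D(A_2)\subset H\to H$ be densely defined closed linear operators with $A_i=A_i^*$ and $\langle A_iu,u\rangle\ge \omega_i|u|^2$ for all $u\in D(A_i)$ ($i=1,2$), for some $\omega_1,\omega_2>0$. Then the following are equivalent: (a) $D(A_2)\subset D(A_1^{1/2})$ and there is $c>0$ with $|A_1^{1/2}u|\le c|A_2u|$ for all $u\in D(A_2)$; (b) $A_1^{1/2}A_2^{-1}$ is a bounded linear operator on $H$; (c) there is $c>0$ such that $|\langle A_1u,v\rangle|\le c\,|A_2v|\,\langle A_1u,u\rangle^{1/2}$ for all $u\in D(A_1)$ and all $v\in D(A_2)$.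
   Context: $A_1^{1/2}$ denotes the (self-adjoint, positive) square root of $A_1$, with domain $D(A_1^{1/2})$. *)

(* Defs.v *)
From HB Require Import structures.
From mathcomp Require Import all_boot all_order all_algebra.
From mathcomp Require Import reals.
Set Implicit Arguments. Unset Strict Implicit. Unset Printing Implicit Defensive.
Import Order.TTheory GRing.Theory Num.Theory.
Local Open Scope ring_scope.

Section Hilbert.
Variables (R : realType) (V : lmodType R) (ip : V -> V -> R).

Definition is_inner_product : Prop :=
  [/\ (forall (a : R) (u v w : V), ip (a *: u + v) w = a * ip u w + ip v w),
      (forall u v, ip u v = ip v u),
      (forall u, 0 <= ip u u) &
      (forall u, ip u u = 0 -> u = 0)].

Definition hnorm (u : V) : R := Num.sqrt (ip u u).

Definition seq_cvg (x : nat -> V) (l : V) : Prop :=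
  forall e : R, 0 < e -> exists N : nat, forall n, (N <= n)%N -> hnorm (x n - l) < e.

Definition seq_cauchy (x : nat -> V) : Prop :=
  forall e : R, 0 < e -> exists N : nat,
    forall m n, (N <= m)%N -> (N <= n)%N -> hnorm (x n - x m) < e.

Definition is_complete : Prop :=
  forall x : nat -> V, seq_cauchy x -> exists l, seq_cvg x l.

Definition is_hilbert : Prop := is_inner_product /\ is_complete.

(* A (possibly unbounded) operator is a pair (D, A): domain D and action A
   (values of A outside D are irrelevant). *)

Definition linear_op (D : V -> Prop) (A : V -> V) : Prop :=
  [/\ D 0,
      (forall (a : R) u v, D u -> D v -> D (a *: u + v)) &
      (forall (a : R) u v, D u -> D v -> A (a *: u + v) = a *: A u + A v)].

Definition dense (D : V -> Prop) : Prop :=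
  forall x (e : R), 0 < e -> exists y, D y /\ hnorm (x - y) < e.

Definition closed_op (D : V -> Prop) (A : V -> V) : Prop :=
  forall (x : nat -> V) u f, (forall n, D (x n)) ->
    seq_cvg x u -> seq_cvg (fun n => A (x n)) f -> D u /\ A u = f.

(* A = A-adjoint: the adjoint domain {v | exists w, forall u in D(A), <Au,v> = <u,w>}
   equals D(A), and the adjoint acts as A on it (the adjoint value at v is the
   unique such w, D being dense). *)
Definition self_adjoint (D : V -> Prop) (A : V -> V) : Prop :=
  (forall v, D v <-> exists w, forall u, D u -> ip (A u) v = ip u w) /\
  (forall u v, D u -> D v -> ip (A u) v = ip u (A v)).

Definition bounded_below (D : V -> Prop) (A : V -> V) (omega : R) : Prop :=
  forall u, D u -> omega * hnorm u ^+ 2 <= ip (A u) u.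

(* (DS, S) is the (positive self-adjoint) square root of (D, A):
   S is a densely defined linear self-adjoint nonnegative operator with S^2 = A,
   including equality of domains D(A) = {u in D(S) | S u in D(S)}. *)
Definition is_sqrt_op (DS : V -> Prop) (S : V -> V) (D : V -> Prop) (A : V -> V) : Prop :=
  [/\ linear_op DS S, dense DS, self_adjoint DS S &
      (forall u, DS u -> 0 <= ip (S u) u)] /\
  ((forall u, D u <-> DS u /\ DS (S u)) /\
   (forall u, D u -> S (S u) = A u)).

(* graph of the composite S A2^{-1}: f |-> S u where u in D(A2), A2 u = f, u in D(S) *)
Definition comp_inv_graph (DS : V -> Prop) (S : V -> V) (D2 : V -> Prop) (A2 : V -> V)
    (f g : V) : Prop :=
  exists u, [/\ D2 u, A2 u = f, DS u & S u = g].

Definition is_bounded_linear_graph (G : V -> V -> Prop) : Prop :=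
  exists T : V -> V,
    [/\ (forall (a : R) f g, T (a *: f + g) = a *: T f + T g),
        (exists c : R, forall f, hnorm (T f) <= c * hnorm f) &
        (forall f g, G f g <-> g = T f)].

End Hilbert.

(* Main.v *)
Require Import Defs.
From HB Require Import structures.
From mathcomp Require Import all_boot all_order all_algebra.
From mathcomp Require Import classical_sets boolp reals.
From mathcomp Require Import ring lra zify.
Import Order.TTheory GRing.Theory Num.Theory.
Local Open Scope ring_scope.

Lemma archi_small (R : realType) (r : R) : 0 < r ->
  exists N : nat, forall n, (N <= n)%N -> 1 / (n.+1)%:R < r.
Proof.
move=> r0; have r0' : 0 <= r^-1 by rewrite invr_ge0 ltW.
have h := archimedean.Num.Theory.archi_boundP r0'.
set N := archimedean.Num.Def.archi_bound _ in h.
exists N => n hn.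
have hN : (N%:R : R) <= n.+1%:R by rewrite ler_nat; lia.
have hp : (0 : R) < n.+1%:R by rewrite ltr0n.
rewrite mul1r -(invrK r) ltf_pV2 ?posrE ?invr_gt0 //.
exact: lt_le_trans h hN.
Qed.

Section IP.
Variables (R : realType) (V : lmodType R) (ip : V -> V -> R).
Hypothesis hip : is_inner_product ip.

Lemma ipL a u v w : ip (a *: u + v) w = a * ip u w + ip v w.
Proof. by move: hip => [h _ _ _]; apply: h. Qed.
Lemma ipC u v : ip u v = ip v u.
Proof. by move: hip => [_ h _ _]; apply: h. Qed.
Lemma ip_ge0 u : 0 <= ip u u.
Proof. by move: hip => [_ _ h _]; apply: h. Qed.
Lemma ip_eq0 u : ip u u = 0 -> u = 0.
Proof. by move: hip => [_ _ _ h]; apply: h. Qed.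

Lemma ip0l w : ip 0 w = 0.
Proof.
have := ipL 1 0 0 w; rewrite scale1r addr0 mul1r => h.
have : ip 0 w + ip 0 w - ip 0 w = ip 0 w - ip 0 w by rewrite -h.
by rewrite addrK subrr.
Qed.
Lemma ipDl u v w : ip (u + v) w = ip u w + ip v w.
Proof. by rewrite -[u]scale1r ipL mul1r scale1r. Qed.
Lemma ipZl a u w : ip (a *: u) w = a * ip u w.
Proof. by rewrite -[a *: u]addr0 ipL ip0l addr0. Qed.
Lemma ipNl u w : ip (- u) w = - ip u w.
Proof. by rewrite -scaleN1r ipZl mulN1r. Qed.
Lemma ipBl u v w : ip (u - v) w = ip u w - ip v w.
Proof. by rewrite ipDl ipNl. Qed.
Lemma ip0r w : ip w 0 = 0.
Proof. by rewrite ipC ip0l. Qed.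
Lemma ipDr u v w : ip w (u + v) = ip w u + ip w v.
Proof. by rewrite ipC ipDl !(ipC w). Qed.
Lemma ipZr a u w : ip w (a *: u) = a * ip w u.
Proof. by rewrite ipC ipZl ipC. Qed.
Lemma ipNr u w : ip w (- u) = - ip w u.
Proof. by rewrite ipC ipNl ipC. Qed.
Lemma ipBr u v w : ip w (u - v) = ip w u - ip w v.
Proof. by rewrite ipDr ipNr. Qed.

Lemma hnorm_ge0 u : 0 <= hnorm ip u.
Proof. exact: sqrtr_ge0. Qed.
Lemma hnorm_sq u : hnorm ip u ^+ 2 = ip u u.
Proof. by rewrite /hnorm sqr_sqrtr // ip_ge0. Qed.
Lemma hnorm0 : hnorm ip 0 = 0.
Proof. by rewrite /hnorm ip0l sqrtr0. Qed.
Lemma hnorm_eq0 u : hnorm ip u = 0 -> u = 0.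
Proof. by move=> h; apply: ip_eq0; rewrite -hnorm_sq h expr0n. Qed.

Lemma ip_expand a b u v :
  ip (a *: u + b *: v) (a *: u + b *: v) =
  a ^+ 2 * ip u u + 2 * a * b * ip u v + b ^+ 2 * ip v v.
Proof.
rewrite !ipDl !ipDr !ipZl !ipZr (ipC v u); ring.
Qed.

Lemma CS u v : `|ip u v| <= hnorm ip u * hnorm ip v.
Proof.
have [v0|vn0] := eqVneq v 0.
  by rewrite v0 ip0r hnorm0 mulr0 normr0.
have hb : 0 < ip v v.
  rewrite lt_neqAle ip_ge0 andbT; apply/eqP => h.
  by move/eqP: vn0; apply; apply: ip_eq0.
set a := ip u v; set b := ip v v; set c := ip u u.
have := ip_ge0 (1 *: u + (- a / b) *: v); rewrite ip_expand -/a -/b -/c => h.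
have key : a ^+ 2 <= c * b.
  have e : 1 ^+ 2 * c + 2 * 1 * (- a / b) * a + (- a / b) ^+ 2 * b
           = c - a ^+ 2 / b by field; rewrite gt_eqF.
  rewrite e subr_ge0 ler_pdivrMr // in h.
rewrite /hnorm -sqrtrM ?ip_ge0 // -sqrtr_sqr ler_sqrt //.
by rewrite mulr_ge0 // ip_ge0.
Qed.

Lemma hnormD u v : hnorm ip (u + v) <= hnorm ip u + hnorm ip v.
Proof.
rewrite -(ler_pXn2r (_ : (0 < 2)%N)) ?nnegrE ?addr_ge0 ?hnorm_ge0 //.
rewrite hnorm_sq -[u]scale1r -[v]scale1r ip_expand !scale1r.
rewrite -!hnorm_sq.
have := CS u v; have := ler_norm (ip u v) => h1 h2.
nra.
Qed.

Lemma hnormZ a u : hnorm ip (a *: u) = `|a| * hnorm ip u.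
Proof.
by rewrite /hnorm ipZl ipZr mulrA -expr2 sqrtrM ?sqr_ge0 // sqrtr_sqr.
Qed.

Lemma hnormN u : hnorm ip (- u) = hnorm ip u.
Proof. by rewrite -scaleN1r hnormZ normrN normr1 mul1r. Qed.

Lemma hnormB u v : hnorm ip (u - v) = hnorm ip (v - u).
Proof. by rewrite -hnormN opprB. Qed.


Lemma small_eq0 (d : R) : (forall e : R, 0 < e -> `|d| < e) -> d = 0.
Proof.
move=> H; apply/eqP; rewrite -normr_eq0; apply/eqP.
have [h|h] := eqVneq `|d| 0 => //.
have hp : 0 < `|d| by rewrite lt_neqAle eq_sym h normr_ge0.
by have := H _ hp; rewrite ltxx.
Qed.

Lemma dense_bound (P : V -> Prop) (z : V) (C : R) :
  dense ip P -> 0 <= C -> (forall x, P x -> `|ip x z| <= C * hnorm ip x) ->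
  hnorm ip z <= C.
Proof.
move=> hD C0 H; rewrite leNgt; apply/negP => hlt.
set n := hnorm ip z in hlt *.
have n0 : 0 < n by apply: le_lt_trans hlt.
set e := n * (n - C) / (n + C + 1).
have epos : 0 < e by rewrite /e divr_gt0 ?mulr_gt0 ?subr_gt0 //; lra.
have he : e * (n + C + 1) = n * (n - C) by rewrite /e mulfVK //; lra.
have [y [Py hy]] := hD z e epos.
have h1 := CS (z - y) z.
have h2 := H y Py.
have h3 : hnorm ip y <= n + hnorm ip (z - y).
  by have := hnormD z (y - z); rewrite addrC subrK (hnormB y z).
have h4 : ip z z = ip (z - y) z + ip y z by rewrite ipBl subrK.
have h5 : ip z z = n ^+ 2 by rewrite hnorm_sq.
have h6 := ler_norm (ip (z - y) z).
have h7 := ler_norm (ip y z).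
have h8 := hnorm_ge0 (z - y).
have h9 := hnorm_ge0 y.
set m := hnorm ip (z - y) in h1 h3 h8 hy.
set p := hnorm ip y in h2 h3 h9.
have h10 : n ^+ 2 <= m * n + C * (n + m).
  rewrite -h5 h4; apply: (le_trans (lerD h6 h7)); apply: lerD => //.
  by apply: (le_trans h2); apply: ler_wpM2l.
nra.
Qed.
Arguments dense_bound {P z C}.


Lemma riesz (P : V -> Prop) (phi : V -> R) (C : R) :
  is_complete ip -> P 0 -> (forall a u v, P u -> P v -> P (a *: u + v)) ->
  (forall a u v, P u -> P v -> phi (a *: u + v) = a * phi u + phi v) -> 0 <= C ->
  (forall x, P x -> `|phi x| <= C * hnorm ip x) ->
  exists w, forall x, P x -> phi x = ip x w.
Proof.
move=> hc P0 PL phiL C0 Hb.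
have phi0 : phi 0 = 0.
  have := phiL 1 0 0 P0 P0; rewrite scale1r addr0 mul1r => h.
  have : phi 0 + phi 0 - phi 0 = phi 0 - phi 0 by rewrite -h.
  by rewrite addrK subrr.
have PZ a u : P u -> P (a *: u) by move=> Pu; rewrite -[a *: u]addr0; apply: PL.
have phiZ a u : P u -> phi (a *: u) = a * phi u.
  by move=> Pu; rewrite -[a *: u]addr0 phiL // phi0 addr0.
have PD u v : P u -> P v -> P (u + v) by move=> Pu Pv; have := PL 1 u v Pu Pv; rewrite scale1r.
have phiD u v : P u -> P v -> phi (u + v) = phi u + phi v.
  by move=> Pu Pv; have := phiL 1 u v Pu Pv; rewrite scale1r mul1r.
pose J x := ip x x - 2 * phi x.
have Jlb x : P x -> - C ^+ 2 <= J x.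
  move=> Px; have := Hb x Px; have := ler_norm (phi x); have := hnorm_ge0 x.
  rewrite /J -hnorm_sq => h0 h1 h2.
  have h3 : phi x <= C * hnorm ip x by apply: le_trans h2.
  have h4 := sqr_ge0 (hnorm ip x - C); rewrite sqrrB in h4.
  lra.
pose E : set R := fun r => exists x, P x /\ r = J x.
have hinf : has_inf E.
  split; first by exists (J 0), 0.
  by exists (- C ^+ 2) => r [x [Px ->]]; apply: Jlb.
pose m := inf E.
have mlb x : P x -> m <= J x by move=> Px; apply: (ge_inf (proj2 hinf)); by exists x.
have madh eps : 0 < eps -> exists x, P x /\ J x < m + eps.
  move=> ep; have [r [x [Px ->]] hr] := inf_adherent ep hinf; by exists x.
pose s (n : nat) : R := 1 / (n.+1)%:R.
have s0 n : 0 < s n by rewrite /s divr_gt0 ?ltr0n.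
have ex n : exists x, P x /\ J x < m + s n ^+ 2 by apply: madh; rewrite exprn_gt0.
pose xs n := sval (cid (ex n)).
have Pxs n : P (xs n) by rewrite /xs; case: (cid (ex n)) => x [].
have Jxs n : J (xs n) < m + s n ^+ 2 by rewrite /xs; case: (cid (ex n)) => x [].
have para x y : P x -> P y ->
    J x + J y = 2 * J ((1/2) *: (x + y)) + (1/2) * ip (x - y) (x - y).
  move=> Px Py; rewrite /J phiZ; last by apply: PD.
  rewrite phiD //.
  have -> : (1/2) *: (x + y) = (1/2) *: x + (1/2) *: y by rewrite scalerDr.
  have -> : x - y = 1 *: x + (-1) *: y by rewrite scale1r scaleN1r.
  rewrite !ip_expand.
  by field.
have cau n k : ip (xs n - xs k) (xs n - xs k) < 2 * (s n ^+ 2 + s k ^+ 2).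
  have := para _ _ (Pxs n) (Pxs k).
  have := mlb _ (PZ (1/2) _ (PD _ _ (Pxs n) (Pxs k))).
  have := Jxs n; have := Jxs k. lra.
have hcau : seq_cauchy ip xs.
  move=> e e0; have e2 : 0 < e / 2 by lra.
  have [N hN] := @archi_small _ _ e2.
  exists N => k n hk hn.
  have h1 := cau n k; have h2 : s k < e / 2 by apply: hN.
  have h3 : s n < e / 2 by apply: hN.
  rewrite -hnorm_sq in h1; have h4 := hnorm_ge0 (xs n - xs k).
  have h5 := s0 n; have h6 := s0 k.
  set a := hnorm ip _ in h1 h4 *.
  have h7 : s n ^+ 2 < (e / 2) ^+ 2 by rewrite ltr_pXn2r // ?nnegrE ltW.
  have h8 : s k ^+ 2 < (e / 2) ^+ 2 by rewrite ltr_pXn2r // ?nnegrE ltW.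
  have h9 : a ^+ 2 < e ^+ 2 by lra.
  by rewrite -(ltr_pXn2r (_ : (0 < 2)%N)) // ?nnegrE ltW.
have [w hw] := hc _ hcau.
exists w => y Py.
have var n : `|ip (xs n) y - phi y| <= s n * (1 + ip y y).
  set x := xs n; set d := ip x y - phi y; set q := ip y y.
  have Jt t : J (t *: y + x) = J x + 2 * t * d + t ^+ 2 * q.
    rewrite /J (phiL _ _ _ Py (Pxs n)) -[x in t *: y + x]scale1r ip_expand /d /q (ipC y x).
    ring.
  have h1 := mlb _ (PL (s n) y x Py (Pxs n)).
  have h2 := mlb _ (PL (- s n) y x Py (Pxs n)).
  rewrite !Jt in h1 h2.
  have := Jxs n; rewrite -/x => h3.
  have := s0 n; have := ip_ge0 y; rewrite -/q => hq hs.
  rewrite ler_norml; apply/andP; split; nra.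
apply/esym; rewrite ipC; apply/eqP; rewrite -subr_eq0; apply/eqP.
apply: small_eq0 => e e0.
have hy1 : 0 < hnorm ip y + 1 by have := hnorm_ge0 y; lra.
have hq1 : 0 < 1 + ip y y by have := ip_ge0 y; lra.
have e4 : 0 < e / 2 / (hnorm ip y + 1) by rewrite !divr_gt0.
have [N1 hN1] := hw _ e4.
have e3 : 0 < e / 2 / (1 + ip y y) by rewrite !divr_gt0.
have [N2 hN2] := @archi_small _ _ e3.
pose n := maxn N1 N2.
have a1 := hN1 n (leq_maxl _ _).
have a2 := hN2 n (leq_maxr _ _).
have a3 := var n.
have a4 := CS (w - xs n) y.
have a5 : ip w y - phi y = ip (w - xs n) y + (ip (xs n) y - phi y).
  by rewrite ipBl addrA subrK.
rewrite a5 (le_lt_trans (ler_normD _ _)) //.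
rewrite hnormB in a4.
set h := hnorm ip (xs n - w) in a1 a4.
have a6 : h * hnorm ip y < e / 2.
  have := hnorm_ge0 y; have := hnorm_ge0 (xs n - w); rewrite -/h.
  rewrite ltr_pdivlMr // in a1; nra.
have a7 : s n * (1 + ip y y) < e / 2.
  by rewrite /s -ltr_pdivlMr.
lra.
Qed.

Lemma lin0 (D : V -> Prop) (A : V -> V) : linear_op D A -> A 0 = 0.
Proof.
move=> [D0 _ AL]; have := AL 1 0 0 D0 D0; rewrite !scale1r addr0 => h.
have : A 0 + A 0 - A 0 = A 0 - A 0 by rewrite -h.
by rewrite addrK subrr.
Qed.
Arguments lin0 {D A}.


Lemma linB (D : V -> Prop) (A : V -> V) x y : linear_op D A -> D x -> D y ->
  D (x - y) /\ A (x - y) = A x - A y.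
Proof.
move=> [D0 DL AL] Dx Dy; have -> : x - y = (-1) *: y + x by rewrite scaleN1r addrC.
by split; [apply: DL | rewrite AL // scaleN1r addrC].
Qed.
Arguments linB {D A x y}.


Lemma bb_inj (D : V -> Prop) (A : V -> V) om : linear_op D A -> 0 < om ->
  bounded_below ip D A om -> forall x y, D x -> D y -> A x = A y -> x = y.
Proof.
move=> hl om0 hb x y Dx Dy e.
have [Dxy Axy] := linB hl Dx Dy.
rewrite e subrr in Axy.
have := hb _ Dxy; rewrite Axy ip0l => h.
have h2 := sqr_ge0 (hnorm ip (x - y)).
have : hnorm ip (x - y) ^+ 2 = 0 by nra.
rewrite hnorm_sq => /ip_eq0 /eqP; rewrite subr_eq0 => /eqP //.
Qed.
Arguments bb_inj {D A om}.


Lemma bb_norm (D : V -> Prop) (A : V -> V) om : 0 < om ->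
  bounded_below ip D A om -> forall x, D x -> om * hnorm ip x <= hnorm ip (A x).
Proof.
move=> om0 hb x Dx.
have h1 := hb _ Dx; have h2 := CS (A x) x; have h3 := ler_norm (ip (A x) x).
have h4 := hnorm_ge0 x; have h5 := hnorm_ge0 (A x).
have [h0|hp] := eqVneq (hnorm ip x) 0.
  by rewrite h0 mulr0.
have hp' : 0 < hnorm ip x by rewrite lt_neqAle eq_sym hp h4.
have : om * hnorm ip x * hnorm ip x <= hnorm ip (A x) * hnorm ip x.
  rewrite -mulrA -expr2; apply: (le_trans h1); apply: (le_trans h3); exact: h2.
by rewrite ler_pM2r.
Qed.
Arguments bb_norm {D A om}.


Lemma orth_dense (D : V -> Prop) z : dense ip D -> (forall x, D x -> ip x z = 0) -> z = 0.
Proof.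
move=> hD H; apply: hnorm_eq0; apply/le_anti; rewrite hnorm_ge0 andbT.
apply: (dense_bound hD (lexx 0)) => x Dx; by rewrite H // normr0 mul0r.
Qed.
Arguments orth_dense {D z}.


Lemma surj (D : V -> Prop) (A : V -> V) (om : R) :
  is_complete ip -> linear_op D A -> dense ip D -> self_adjoint ip D A -> 0 < om ->
  bounded_below ip D A om -> forall f, exists u, D u /\ A u = f.
Proof.
move=> hc hl hD [sa1 sa2] om0 hb f.
have [D0 DL AL] := hl.
pose P y := exists x, D x /\ y = A x.
pose xof y := match pselect (P y) with left h => sval (cid h) | right _ => 0 end.
have xofP y : P y -> D (xof y) /\ y = A (xof y).
  rewrite /xof; case: pselect => // h _; by case: (cid h).
have xofA x : D x -> xof (A x) = x.
  move=> Dx; have [h1 h2] := xofP (A x) (ex_intro _ x (conj Dx erefl)).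
  by apply: (bb_inj hl om0 hb) => //.
have [w hw] : exists w, forall y, P y -> ip (xof y) f = ip y w.
  apply: (@riesz P (fun y => ip (xof y) f) (hnorm ip f / om)) => //.
  - by exists 0; split => //; rewrite (lin0 hl).
  - move=> a u v [x [Dx ->]] [x' [Dx' ->]]; exists (a *: x + x'); split; first exact: DL.
    by rewrite AL.
  - move=> a u v [x [Dx ->]] [x' [Dx' ->]].
    by rewrite -AL // !xofA // ?ipL //; apply: DL.
  - by rewrite divr_ge0 ?hnorm_ge0 // ltW.
  - move=> y [x [Dx ->]]; rewrite xofA //.
    apply: (le_trans (CS _ _)).
    have h3 := bb_norm om0 hb _ Dx; have h2 := hnorm_ge0 f; have h1 := hnorm_ge0 x.
    rewrite mulrC mulrAC ler_pdivlMr //.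
    nra.
have Dw : D w.
  by apply/sa1; exists f => u Du; rewrite -hw ?xofA //; exists u.
exists w; split => //.
apply/eqP; rewrite -subr_eq0; apply/eqP; apply: (orth_dense hD) => x Dx.
by rewrite ipBr -sa2 // -hw ?xofA ?subrr //; exists x.
Qed.

End IP.

Theorem lemma3p1 (R : realType) (V : lmodType R) (ip : V -> V -> R)
  (D1 : V -> Prop) (A1 : V -> V) (D2 : V -> Prop) (A2 : V -> V)
  (DS : V -> Prop) (S : V -> V) (omega1 omega2 : R) :
  is_hilbert ip ->
  linear_op D1 A1 -> dense ip D1 -> closed_op ip D1 A1 -> self_adjoint ip D1 A1 ->
  linear_op D2 A2 -> dense ip D2 -> closed_op ip D2 A2 -> self_adjoint ip D2 A2 ->
  0 < omega1 -> bounded_below ip D1 A1 omega1 ->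
  0 < omega2 -> bounded_below ip D2 A2 omega2 ->
  is_sqrt_op ip DS S D1 A1 ->
  let a := (forall u, D2 u -> DS u) /\
           (exists c : R, 0 < c /\ forall u, D2 u -> hnorm ip (S u) <= c * hnorm ip (A2 u)) in
  let b := is_bounded_linear_graph ip (comp_inv_graph DS S D2 A2) in
  let c := exists c : R, 0 < c /\ forall u v, D1 u -> D2 v ->
             `|ip (A1 u) v| <= c * hnorm ip (A2 v) * Num.sqrt (ip (A1 u) u) in
  (a <-> b) /\ (b <-> c).
Proof.
move=> [hip hcomp] hl1 hD1 hc1 hsa1 hl2 hD2 hc2 hsa2 o1 hb1 o2 hb2
  [[hlS hDS hsaS hposS] [hD1S hSS]].
cbv zeta.
have CS' := @CS R V ip hip.
have hnorm_ge0' := @hnorm_ge0 R V ip.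
have surj2 := @surj R V ip hip D2 A2 omega2 hcomp hl2 hD2 hsa2 o2 hb2.
have surj1 := @surj R V ip hip D1 A1 omega1 hcomp hl1 hD1 hsa1 o1 hb1.
have inj2 := @bb_inj R V ip hip D2 A2 omega2 hl2 o2 hb2.
have := hlS; move=> [DS0 DSL SL].
have := hl2; move=> [D20 D2L A2L].
have := hsaS; move=> [saS1 saS2].
have key1 u v : D1 u -> DS v -> ip (A1 u) v = ip (S u) (S v).
  move=> D1u DSv; have [DSu DSSu] := (hD1S u).1 D1u.
  by rewrite -hSS // saS2.
have key2 u : D1 u -> Num.sqrt (ip (A1 u) u) = hnorm ip (S u).
  move=> D1u; have [DSu DSSu] := (hD1S u).1 D1u.
  by rewrite key1.
have Ssurj y : DS y -> exists u, D1 u /\ S u = y.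
  move=> DSy; have [u' [D1u' ey]] := surj1 y.
  have [DSu' DSSu'] := (hD1S u').1 D1u'.
  exists (S u'); split; last by rewrite hSS.
  by apply/(hD1S (S u')); split => //; rewrite hSS // ey.
have ab : (forall u, D2 u -> DS u) /\
           (exists c : R, 0 < c /\ forall u, D2 u -> hnorm ip (S u) <= c * hnorm ip (A2 u)) ->
          is_bounded_linear_graph ip (comp_inv_graph DS S D2 A2).
  move=> [hDS2 [c0 [c0p hc]]].
  pose uf f := sval (cid (surj2 f)).
  have ufP f : D2 (uf f) /\ A2 (uf f) = f by rewrite /uf; case: (cid (surj2 f)).
  exists (fun f => S (uf f)); split.
  - move=> a0 f g.
    have [h1 h2] := ufP f; have [h3 h4] := ufP g; have [h5 h6] := ufP (a0 *: f + g).
    have -> : uf (a0 *: f + g) = a0 *: uf f + uf g.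
      by apply: inj2 => //; [apply: D2L | rewrite A2L // h2 h4].
    by rewrite SL //; apply: hDS2.
  - exists c0 => f; have [h1 h2] := ufP f; by rewrite -{2}h2 hc.
  - move=> f g; split.
      move=> [u [D2u A2u DSu <-]].
      have [h1 h2] := ufP f.
      by rewrite (inj2 u (uf f)) // h2.
    move=> ->; have [h1 h2] := ufP f; exists (uf f); split => //; exact: hDS2.
have ba : is_bounded_linear_graph ip (comp_inv_graph DS S D2 A2) ->
          (forall u, D2 u -> DS u) /\
           (exists c : R, 0 < c /\ forall u, D2 u -> hnorm ip (S u) <= c * hnorm ip (A2 u)).
  move=> [T [TL [c0 hc0] hG]].
  have hu u : D2 u -> DS u /\ S u = T (A2 u).
    move=> D2u; have [u' [D2u' e DSu' Su']] := (hG (A2 u) (T (A2 u))).2 erefl.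
    have eu : u' = u by apply: inj2.
    by subst u'.
  split; first by move=> u /hu [].
  exists (`|c0| + 1); split; first by rewrite ltr_pwDr ?normr_ge0.
  move=> u D2u; have [_ ->] := hu u D2u.
  apply: (le_trans (hc0 _)); apply: ler_wpM2r; first exact: hnorm_ge0'.
  by rewrite (le_trans (ler_norm _)) // lerDl.
have ac : (forall u, D2 u -> DS u) /\
           (exists c : R, 0 < c /\ forall u, D2 u -> hnorm ip (S u) <= c * hnorm ip (A2 u)) ->
          exists c : R, 0 < c /\ forall u v, D1 u -> D2 v ->
             `|ip (A1 u) v| <= c * hnorm ip (A2 v) * Num.sqrt (ip (A1 u) u).
  move=> [hDS2 [c0 [c0p hc]]]; exists c0; split => // u v D1u D2v.
  rewrite key1 ?key2 //; last exact: hDS2.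
  apply: (le_trans (CS' _ _)).
  have := hc v D2v; have := hnorm_ge0' (S u); have := hnorm_ge0' (S v).
  nra.
have ca : (exists c : R, 0 < c /\ forall u v, D1 u -> D2 v ->
             `|ip (A1 u) v| <= c * hnorm ip (A2 v) * Num.sqrt (ip (A1 u) u)) ->
          (forall u, D2 u -> DS u) /\
           (exists c : R, 0 < c /\ forall u, D2 u -> hnorm ip (S u) <= c * hnorm ip (A2 u)).
  move=> [c0 [c0p hc]].
  have bnd v : D2 v -> forall y, DS y -> `|ip (S y) v| <= c0 * hnorm ip (A2 v) * hnorm ip y.
    move=> D2v y DSy; have [u [D1u <-]] := Ssurj y DSy.
    have [DSu DSSu] := (hD1S u).1 D1u.
    by rewrite -key2 // hSS //; apply: hc.
  have C0 v : 0 <= c0 * hnorm ip (A2 v) by rewrite mulr_ge0 ?hnorm_ge0' // ltW.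
  have DSv v : D2 v -> DS v.
    move=> D2v.
    have phiL : forall a0 u w, DS u -> DS w ->
        ip (S (a0 *: u + w)) v = a0 * ip (S u) v + ip (S w) v.
      by move=> a0 u w DSu DSw; rewrite SL // ipL.
    have [w hw] := @riesz R V ip hip DS (fun y => ip (S y) v) (c0 * hnorm ip (A2 v))
      hcomp DS0 DSL phiL (C0 v) (bnd v D2v).
    by apply/saS1; exists w.
  split => //; exists c0; split => // v D2v.
  apply: (@dense_bound R V ip hip DS (S v) _ hDS (C0 v)) => y DSy.
  by rewrite -(saS2 y v DSy (DSv v D2v)); apply: bnd.
split; split.
- exact: ab.
- exact: ba.
- by move=> /ba /ac.
- by move=> /ca /ab.
Qed.
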